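(* In a non-degenerate RiFle assignment game, for every stable payoff $(\bar u,\bar v)$ there is exactly one matching $\mu$ such that $(\bar u,\bar v;\mu)$ is a stable outcome.
   Context: A RiFle assignment game consists of two disjoint sets of agents $P=\{p_1,\dots,p_n\}$ and $Q=\{q_1,\dots,q_n\}$, a pair of nonnegative real numbers $(\beta_{ij},\gamma_{ij})$ for every pair $(p_i,q_j)\in P\times Q$ (write $\alpha_{ij}=\beta_{ij}+\gamma_{ij}$), and a designation of every agent as rigid or flexible. Let $\mathcal R$ be the set of pairs with at least one rigid agent and $\mathcal F$ the set of pairs with both agents flexible. An outcome $(\bar u,\bar v;\mu)$ consists of a matching $\mu$ between $P$ and $Q$ (write $p_i\stackrel{\mu}{\longleftrightarrow} q_j$) and payoff vectors $\bar u,\bar v\in\mathbb R^n$. It is feasible if: (1) $u_i\ge0$, $v_j\ge0$; (2) if a rigid $p_i$ is matched to $q_j$ then $u_i=\beta_{ij}$ and, if $q_j$ is flexible, $v_j\ge\gamma_{ij}$; symmetrically for a rigid $q_j$ matched to $p_i$: $v_j=\gamma_{ij}$ and, if $p_i$ is flexible, $u_i\ge\beta_{ij}$; (3) $\sum_iu_i+\sum_jv_j=\sum_{p_i\stackrel{\mu}{\longleftrightarrow}q_j}\alpha_{ij}$. It is stable if feasible and $u_i+v_j\ge\alpha_{ij}$ for $(p_i,q_j)\in\mathcal F$ and ($u_i\ge\beta_{ij}$ or $v_j\ge\gamma_{ij}$) for $(p_i,q_j)\in\mathcal R$. A payoff $(\bar u,\bar v)$ is stable if $(\bar u,\bar v;\mu)$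 is a stable outcome for some matching $\mu$. Reservation prices are modeled by rigid dummy agents; for the following definition an agent left unmatched by a matching is regarded as matched to a rigid dummy agent (whose prescribed share for him is his reservation price). Given a coalition $C\subseteq P\cup Q$ and a matching $\mu$, the total payoff to $C$ under $\mu$ is forced if every pair matched under $\mu$ with one agent in $C$ and the other outside $C$ contains a rigid agent; the forced payoff is then $\sum_{p_i\in C,\ p_i\stackrel{\mu}{\longleftrightarrow}q_j}\beta_{ij}+\sum_{q_j\in C,\ p_i\stackrel{\mu}{\longleftrightarrow}q_j}\gamma_{ij}$. The game is non-degenerate if for any two matchings $\mu,\mu'$: whenever $C$ is a minimal coalition such that the payoff to $C$ is forced under both $\mu$ and $\mu'$, and the two forced payoffs are equal, then $\mu$ and $\mu'$ coincide on $C$. *)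

(* Defs.v *)
From HB Require Import structures.
From mathcomp Require Import all_boot all_order fingroup perm all_algebra.
Set Implicit Arguments. Unset Strict Implicit. Unset Printing Implicit Defensive.
Import Order.TTheory GRing.Theory Num.Theory.
Local Open Scope ring_scope.

(* A RiFle assignment game with n agents on each side:
   agents p_i, q_j are indexed by 'I_n;
   beta i j, gamma i j are the shares of p_i and q_j for the pair (p_i,q_j);
   rigP i (resp. rigQ j) is true iff p_i (resp. q_j) is rigid.
   A matching is a bijection mu : P -> Q, given as a permutation of 'I_n
   (p_i is matched to q_(mu i)). *)

Section RiFle.
Variables (R : realFieldType) (n : nat).
Variables (beta gamma : 'I_n -> 'I_n -> R) (rigP rigQ : 'I_n -> bool).

Definition alpha (i j : 'I_n) : R := beta i j + gamma i j.

Definition flex_pair (i j : 'I_n) : bool := ~~ rigP i && ~~ rigQ j.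

Definition feasible (u v : 'I_n -> R) (mu : {perm 'I_n}) : Prop :=
  [/\ (forall i, 0 <= u i), (forall j, 0 <= v j),
      (forall i, rigP i -> u i = beta i (mu i) /\
                           (~~ rigQ (mu i) -> gamma i (mu i) <= v (mu i))),
      (forall i, rigQ (mu i) -> v (mu i) = gamma i (mu i) /\
                           (~~ rigP i -> beta i (mu i) <= u i)) &
      \sum_i u i + \sum_j v j = \sum_i alpha i (mu i)].

Definition stable_outcome (u v : 'I_n -> R) (mu : {perm 'I_n}) : Prop :=
  feasible u v mu /\
  (forall i j, if flex_pair i j then alpha i j <= u i + v j
               else (beta i j <= u i) || (gamma i j <= v j)).

Definition stable_payoff (u v : 'I_n -> R) : Prop :=
  exists mu : {perm 'I_n}, stable_outcome u v mu.

(* A coalition C ⊆ P ∪ Q is a pair (CP, CQ) of index sets. *)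
Definition forced (CP CQ : {set 'I_n}) (mu : {perm 'I_n}) : bool :=
  [forall i, ((i \in CP) != (mu i \in CQ)) ==> (rigP i || rigQ (mu i))].

Definition forced_payoff (CP CQ : {set 'I_n}) (mu : {perm 'I_n}) : R :=
  \sum_(i in CP) beta i (mu i) + \sum_(j in CQ) gamma ((mu^-1)%g j) j.

Definition forced_both (mu mu' : {perm 'I_n}) (CP CQ : {set 'I_n}) : bool :=
  forced CP CQ mu && forced CP CQ mu'.

Definition minimal_forced (mu mu' : {perm 'I_n}) (CP CQ : {set 'I_n}) : Prop :=
  [/\ (CP != set0) || (CQ != set0), forced_both mu mu' CP CQ &
      forall DP DQ : {set 'I_n}, DP \subset CP -> DQ \subset CQ ->
        (DP != set0) || (DQ != set0) -> forced_both mu mu' DP DQ ->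
        DP = CP /\ DQ = CQ].

Definition non_degenerate : Prop :=
  forall (mu mu' : {perm 'I_n}) (CP CQ : {set 'I_n}),
    minimal_forced mu mu' CP CQ ->
    forced_payoff CP CQ mu = forced_payoff CP CQ mu' ->
    (forall i, i \in CP -> mu i = mu' i) /\
    (forall j, j \in CQ -> (mu^-1)%g j = (mu'^-1)%g j).

End RiFle.

(* Main.v *)
Require Import Defs.
From HB Require Import structures.
From mathcomp Require Import all_boot all_order fingroup perm all_algebra.
Import Order.TTheory GRing.Theory Num.Theory.
Local Open Scope ring_scope.
Set Implicit Arguments. Unset Strict Implicit.

Section Aux.
Variables (R : realFieldType) (n : nat).
Variables (beta gamma : 'I_n -> 'I_n -> R) (rigP rigQ : 'I_n -> bool).

Lemma forcedP (CP CQ : {set 'I_n}) (mu : {perm 'I_n}) :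
  forced rigP rigQ CP CQ mu <->
  (forall k, ~~ (rigP k || rigQ (mu k)) -> (k \in CP) = (mu k \in CQ)).
Proof.
split.
  move=> /forallP H k nr; have := H k.
  by case: eqP => // _; rewrite (negbTE nr).
move=> H; apply/forallP => k; apply/implyP => ne.
apply/negPn/negP => nr; have := H k nr; by move: ne => /eqP.
Qed.

Lemma pair_ge u v mu : stable_outcome beta gamma rigP rigQ u v mu ->
  forall i, alpha beta gamma i (mu i) <= u i + v (mu i).
Proof.
move=> [[_ _ HP HQ _] Hs] i; rewrite /alpha.
case rP: (rigP i).
  have [-> H2] := HP i rP.
  case rQ: (rigQ (mu i)).
    by have [-> _] := HQ i rQ.
  by rewrite lerD2l; apply: H2; rewrite rQ.
case rQ: (rigQ (mu i)).
  have [-> H2] := HQ i rQ.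
  by rewrite lerD2r; apply: H2; rewrite rP.
by have := Hs i (mu i); rewrite /flex_pair rP rQ.
Qed.

Lemma pair_eq u v mu : stable_outcome beta gamma rigP rigQ u v mu ->
  forall i, u i + v (mu i) = alpha beta gamma i (mu i).
Proof.
move=> Hst i.
have Hge := pair_ge Hst.
have [[_ _ _ _ Hsum] _] := Hst.
have Hs : \sum_i (u i + v (mu i) - alpha beta gamma i (mu i)) = 0.
  have Ev : \sum_i v (mu i) = \sum_j v j.
    by rewrite [RHS](reindex_inj (@perm_inj _ mu)).
  rewrite sumrB big_split /= Ev Hsum.
  by rewrite subrr.
have H0 : forall j : 'I_n, true -> 0 <= u j + v (mu j) - alpha beta gamma j (mu j).
  by move=> j _; rewrite subr_ge0.
have := @psumr_eq0P _ _ _ _ H0 Hs i isT.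
by move=> /eqP; rewrite subr_eq0 => /eqP.
Qed.

Lemma rigid_eq u v mu : stable_outcome beta gamma rigP rigQ u v mu ->
  forall i, rigP i || rigQ (mu i) ->
  u i = beta i (mu i) /\ v (mu i) = gamma i (mu i).
Proof.
move=> Hst i /orP [rP|rQ]; have He := pair_eq Hst i;
  have [[_ _ HP HQ _] _] := Hst; move: He; rewrite /alpha.
  have [-> _] := HP i rP; by move=> /addrI ->.
have [-> _] := HQ i rQ; by move=> /addIr ->.
Qed.

Lemma forced_payoffE u v mu CP CQ : stable_outcome beta gamma rigP rigQ u v mu ->
  forced rigP rigQ CP CQ mu ->
  forced_payoff beta gamma CP CQ mu = \sum_(i in CP) u i + \sum_(j in CQ) v j.
Proof.
move=> Hst /forcedP Hf; rewrite /forced_payoff.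
rewrite [\sum_(i in CP) beta _ _]big_mkcond [\sum_(i in CP) u _]big_mkcond.
rewrite [\sum_(j in CQ) gamma _ _]big_mkcond [\sum_(j in CQ) v _]big_mkcond.
rewrite [\sum_j (if _ then gamma _ _ else _)](reindex_inj (@perm_inj _ mu)).
rewrite [\sum_j (if _ then v _ else _)](reindex_inj (@perm_inj _ mu)) /=.
rewrite -!big_split; apply: eq_bigr => i _ /=; rewrite permK.
have He := pair_eq Hst i; move: He; rewrite /alpha => He.
case: (boolP (rigP i || rigQ (mu i))) => r.
  have [-> ->] := rigid_eq Hst r; by [].
have := Hf i r; case: (i \in CP); case: (mu i \in CQ) => // _.
Qed.

End Aux.

Theorem proposition4 (R : realFieldType) (n : nat)
    (beta gamma : 'I_n -> 'I_n -> R) (rigP rigQ : 'I_n -> bool) :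
  (forall i j, 0 <= beta i j) -> (forall i j, 0 <= gamma i j) ->
  non_degenerate beta gamma rigP rigQ ->
  forall u v : 'I_n -> R,
    stable_payoff beta gamma rigP rigQ u v ->
    exists! mu : {perm 'I_n}, stable_outcome beta gamma rigP rigQ u v mu.
Proof.
move=> _ _ ND u v [mu Hmu]; exists mu; split => // mu' Hmu'.
apply/permP => i.
pose S := [set D : {set 'I_n} * {set 'I_n} |
            forced_both rigP rigQ mu mu' D.1 D.2 && (i \in D.1)].
pose KP := [set k | [forall D in S, k \in D.1]].
pose KQ := [set k | [forall D in S, k \in D.2]].
have iK : i \in KP.
  by rewrite inE; apply/forall_inP => D; rewrite inE => /andP [].
have fK : forall m : {perm 'I_n},
    (forall D, D \in S -> forced rigP rigQ D.1 D.2 m) ->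
    forced rigP rigQ KP KQ m.
  move=> m H; apply/forcedP => k nr; rewrite !inE.
  apply: eq_forallb => D; case DS: (D \in S) => //=.
  by have /forcedP := H D DS; apply.
have fbK : forced_both rigP rigQ mu mu' KP KQ.
  by apply/andP; split; apply: fK => D; rewrite inE => /andP [/andP []].
have KsubD : forall DP DQ, forced_both rigP rigQ mu mu' DP DQ -> i \in DP ->
    KP \subset DP /\ KQ \subset DQ.
  move=> DP DQ fD iD; have DS : (DP, DQ) \in S by rewrite inE fD iD.
  split; apply/subsetP => k; rewrite inE => /forall_inP H; exact: (H _ DS).
have fdiff : forall (m : {perm 'I_n}) AP AQ BP BQ,
    forced rigP rigQ AP AQ m -> forced rigP rigQ BP BQ m ->
    forced rigP rigQ (AP :\: BP) (AQ :\: BQ) m.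
  move=> m AP AQ BP BQ /forcedP HA /forcedP HB; apply/forcedP => k nr.
  by rewrite !inE HA // HB.
have minK : minimal_forced rigP rigQ mu mu' KP KQ.
  split => //.
    by apply/orP; left; apply/set0Pn; exists i.
  move=> DP DQ sP sQ ne fD.
  case iD: (i \in DP).
    have [s1 s2] := KsubD _ _ fD iD.
    by split; apply/eqP; rewrite eqEsubset ?s1 ?s2 ?sP ?sQ.
  have fE : forced_both rigP rigQ mu mu' (KP :\: DP) (KQ :\: DQ).
    move: fbK fD => /andP [a1 a2] /andP [b1 b2].
    by apply/andP; split; apply: fdiff.
  have iE : i \in KP :\: DP by rewrite inE iD iK.
  have [s1 s2] := KsubD _ _ fE iE.
  exfalso; move: ne => /orP [] /set0Pn [k kD].
    have := subsetP s1 k (subsetP sP k kD); by rewrite inE kD.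
  have := subsetP s2 k (subsetP sQ k kD); by rewrite inE kD.
have [fmu fmu'] := andP fbK.
have [H1 _] := ND _ _ _ _ minK
   (etrans (forced_payoffE Hmu fmu) (esym (forced_payoffE Hmu' fmu'))).
exact: H1.
Qed.
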